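(* The (a priori) Recursive Measure satisfies the strong subadditivity blocker postulate. For every SVG $\mathcal{G}$ on $N$ and every bloc $I\subseteq N$ that contains at least one YES-blocker, or that contains at least one NO-blocker, we have $$\widehat{RM'}_I\le\sum_{k\in I}RM'_k(\mathcal{G}).$$ Consequently RM also satisfies the weak subadditivity blocker postulate.
   Context: A simple voting game (SVG) is a pair $\mathcal{G}=(N,\mathcal{W})$ with $N$ a nonempty finite set of $n$ players and $\mathcal{W}\subseteq 2^N$ (the winning sets) such that: - $\mathcal{W}$ is monotone; - $\emptyset\notin\mathcal{W}$ and $N\in\mathcal{W}$. A division is $(S,N\setminus S)$ with $S\subseteq N$ the YES-voters; it is winning if $S\in\mathcal{W}$ and losing otherwise. Decisiveness and success: - Player $k$ is YES-decisive in $S$ if $k\in S\in\mathcal{W}$ and $S\setminus\{k\}\notin\mathcal{W}$. - Player $k$ is NO-decisive in $S$ if $k\notin S\notin\mathcal{W}$ and $S\cup\{k\}\in\mathcal{W}$. - Player $k$ is decisive if it is either. - Player $k$ is successful in $S$ if ($k\in S$ and $S\in\mathcal{W}$) or ($k\notin S$ and $S\notin\mathcal{W}$). Loyal children: if $S\in\mathcal{W}$, the loyal children of $S$ are the divisions $S\setminus\{m\}$ with $m\in S$ and $S\setminus\{m\}\in\mathcal{W}$. If $S\notin\mathcal{W}$, they are the divisions $S\cup\{m\}$ with $m\notin S$ and $S\cup\{m\}\notin\mathcal{W}$. The recursive efficacy score $\alpha_k(S)$ is defined by: - $\alpha_k(S)=1$ if $k$ is decisive in $S$; - $\alpha_k(S)=0$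 if $k$ is not successful in $S$; - otherwise, $\alpha_k(S)$ is the average of $\alpha_k$ over the (nonempty) set of loyal children of $S$. The a priori Recursive Measure is $RM'_k=2^{-n}\sum_{S\subseteq N}\alpha_k(S)$. Blockers: $b$ is a YES-blocker if $b\in S$ for all $S\in\mathcal{W}$, and a NO-blocker if $b\notin S$ for all $S\notin\mathcal{W}$. Bloc game: for a bloc $I$ with lead member $i\in I$, $\hat{\mathcal{G}}$ has players $(N\setminus I)\cup\{i\}$ and winning sets $$\{S\cup\{i\}:S\subseteq N\setminus I,\ S\cup I\in\mathcal{W}\}\cup\{S:S\subseteq N\setminus I,\ S\in\mathcal{W}\}.$$ $\widehat{RM'}_I$ is $RM'_i$ in $\hat{\mathcal{G}}$. *)

(* Defs.v *)
From mathcomp Require Import all_boot all_order all_algebra.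
Set Implicit Arguments. Unset Strict Implicit. Unset Printing Implicit Defensive.
Import Order.TTheory GRing.Theory Num.Theory.
Local Open Scope ring_scope.

Section SVG.
Variable T : finType.

Definition is_SVG (N : {set T}) (W : {set {set T}}) : Prop :=
  [/\ N != set0,
      (forall S : {set T}, S \in W -> S \subset N),
      (forall S S' : {set T}, S \in W -> S \subset S' -> S' \subset N -> S' \in W),
      set0 \notin W &
      N \in W].

Definition yes_decisive (W : {set {set T}}) (k : T) (S : {set T}) : bool :=
  [&& k \in S, S \in W & S :\ k \notin W].

Definition no_decisive (W : {set {set T}}) (k : T) (S : {set T}) : bool :=
  [&& k \notin S, S \notin W & k |: S \in W].

Definition decisive W k S : bool := yes_decisive W k S || no_decisive W k S.

Definition successful (W : {set {set T}}) (k : T) (S : {set T}) : bool :=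
  ((k \in S) && (S \in W)) || ((k \notin S) && (S \notin W)).

Definition loyal_children (N : {set T}) (W : {set {set T}}) (S : {set T})
  : {set {set T}} :=
  if S \in W then [set S :\ m | m in [set m in S | S :\ m \in W]]
  else [set m |: S | m in [set m in N :\: S | m |: S \notin W]].

(* Recursive efficacy score, computed with explicit fuel; the recursion depth
   never exceeds #|N|, so fuel #|N|.+1 computes the true value. *)
Fixpoint alpha_fuel (fuel : nat) (N : {set T}) (W : {set {set T}}) (k : T)
  (S : {set T}) : rat :=
  match fuel with
  | 0 => 0
  | n.+1 =>
    if decisive W k S then 1
    else if ~~ successful W k S then 0
    else (\sum_(C in loyal_children N W S) alpha_fuel n N W k C)
           / (#|loyal_children N W S|)%:R
  end.

Definition alpha (N : {set T}) (W : {set {set T}}) (k : T) (S : {set T}) : rat := alpha_fuel #|N|.+1 N W k S.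

Definition RM' (N : {set T}) (W : {set {set T}}) (k : T) : rat :=
  (\sum_(S in powerset N) alpha N W k S) / (2 ^ #|N|)%:R.

Definition yes_blocker (W : {set {set T}}) (b : T) : Prop :=
  forall S : {set T}, S \in W -> b \in S.

Definition no_blocker (N : {set T}) (W : {set {set T}}) (b : T) : Prop :=
  forall S : {set T}, S \subset N -> S \notin W -> b \notin S.

Definition bloc_players (N I : {set T}) (i : T) : {set T} :=
  (N :\: I) :|: [set i].

Definition bloc_game (N : {set T}) (W : {set {set T}}) (I : {set T}) (i : T)
  : {set {set T}} :=
  [set S :|: [set i] | S in [set S in powerset (N :\: I) | S :|: I \in W]]
  :|: [set S in powerset (N :\: I) | S \in W].

Definition RM'_bloc (N : {set T}) (W : {set {set T}}) (I : {set T}) (i : T) : rat :=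
  RM' (bloc_players N I i) (bloc_game N W I i) i.

End SVG.

(* Main.v *)
Require Import Defs.
From mathcomp Require Import all_boot all_order all_algebra.
From mathcomp Require Import ring lra zify.
Import Order.TTheory GRing.Theory Num.Theory.
Local Open Scope ring_scope.
Set Implicit Arguments. Unset Strict Implicit.


Lemma sum_sub_le {T : finType} (A B : {set T}) (F : T -> rat) :
  A \subset B -> (forall x, x \in B -> 0 <= F x) ->
  \sum_(x in A) F x <= \sum_(x in B) F x.
Proof.
move=> AB F0; rewrite [X in _ <= X](big_setID A) /=; rewrite (_ : B :&: A = A); last by apply/setIidPr. rewrite lerDl.
by apply: sumr_ge0 => x; rewrite inE => /andP[_ ?]; apply: F0.
Qed.

Lemma alpha_fuel_bnd {T : finType} (f : nat) (N : {set T}) (W : {set {set T}}) (k : T) (S : {set T}) : 0 <= alpha_fuel f N W k S /\ alpha_fuel f N W k S <= 1.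
Proof.
elim: f S => [|f IH] S /=; first by split.
case: ifP => _; first by split.
case: ifP => _; first by split.
set L := loyal_children N W S.
have s0 : 0 <= \sum_(C in L) alpha_fuel f N W k C.
  by apply: sumr_ge0 => C _; case: (IH C).
have s1 : \sum_(C in L) alpha_fuel f N W k C <= #|L|%:R.
  rewrite -sum1_card natr_sum; apply: ler_sum => C _; by case: (IH C).
case: (posnP #|L|) => [->|Lp]; first by rewrite invr0 mulr0; split.
split; first by rewrite divr_ge0.
by rewrite ler_pdivrMr ?mul1r // ltr0n.
Qed.

Definition dd {T : finType} (N : {set T}) (W : {set {set T}}) (S : {set T}) := if S \in W then #|S| else #|N :\: S|.

Lemma dd_child {T : finType} (N : {set T}) (W : {set {set T}}) (S : {set T}) (C : {set T}) : C \in loyal_children N W S -> (dd N W C < dd N W S)%N.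
Proof.
rewrite /loyal_children /dd; case: ifP => SW /imsetP[m]; rewrite inE => /andP[mS CW] ->.
  rewrite CW; rewrite (cardsD1 m S) mS; apply/subset_leq_card/subsetP => x.
  by rewrite !inE andbC.
rewrite (negbTE CW); move: mS; rewrite inE => /andP[mS mN].
rewrite (cardsD1 m (N :\: S)) !inE mS mN /= add1n ltnS; apply/subset_leq_card/subsetP => x.
by rewrite !inE; case: (x == m) => //=.
Qed.

Lemma alpha_fuel_stable {T : finType} (f : nat) (f' : nat) (N : {set T}) (W : {set {set T}}) (k : T) (S : {set T}) : (dd N W S < f)%N -> (dd N W S < f')%N ->
  alpha_fuel f N W k S = alpha_fuel f' N W k S.
Proof.
elim: f f' S => [|f IH] [|f'] S //= h h'.
case: ifP => // _; case: ifP => // _; congr (_ / _); apply: eq_bigr => C CL.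
by apply: IH; apply: leq_trans (dd_child CL) _; rewrite -ltnS.
Qed.

Lemma dd_le {T : finType} (N : {set T}) (W : {set {set T}}) (S : {set T}) : S \subset N -> (dd N W S <= #|N|)%N.
Proof.
by move=> SN; rewrite /dd; case: ifP => _; [apply: subset_leq_card | apply: subset_leq_card; apply: subsetDl].
Qed.

Lemma LC_sub {T : finType} (N : {set T}) (W : {set {set T}}) (S : {set T}) (C : {set T}) : S \subset N -> C \in loyal_children N W S -> C \subset N.
Proof.
rewrite /loyal_children => SN; case: ifP => _ /imsetP[m]; rewrite inE => /andP[mS _] ->.
  by apply: subset_trans SN; apply: subsetDl.
by rewrite subUset sub1set SN andbT; move: mS; rewrite !inE => /andP[].
Qed.

Lemma alpha_unfold {T : finType} (N : {set T}) (W : {set {set T}}) (k : T) (S : {set T}) : S \subset N ->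
  alpha N W k S = if decisive W k S then 1 else if ~~ successful W k S then 0
   else (\sum_(C in loyal_children N W S) alpha N W k C) / (#|loyal_children N W S|)%:R.
Proof.
move=> SN; rewrite {1}/alpha /=; case: ifP => // _; case: ifP => // _.
congr (_ / _); apply: eq_bigr => C CL; rewrite /alpha; apply: alpha_fuel_stable.
  by have := dd_child CL; have := dd_le W SN; lia.
by have := dd_child CL; have := dd_le W SN; lia.
Qed.


Lemma alpha_ge0 {T : finType} (N : {set T}) (W : {set {set T}}) (k : T) (S : {set T}) : 0 <= alpha N W k S.
Proof. by case: (alpha_fuel_bnd #|N|.+1 N W k S). Qed.
Lemma alpha_le1 {T : finType} (N : {set T}) (W : {set {set T}}) (k : T) (S : {set T}) : alpha N W k S <= 1.
Proof. by case: (alpha_fuel_bnd #|N|.+1 N W k S). Qed.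


Definition ML {T : finType} (N : {set T}) (W : {set {set T}}) (S : {set T}) := [set m in N :\: S | m |: S \notin W].
Definition MW {T : finType} (W : {set {set T}}) (S : {set T}) := [set m in S | S :\ m \in W].

Lemma LC_lose {T : finType} (N : {set T}) (W : {set {set T}}) (S : {set T}) : S \notin W -> loyal_children N W S = [set m |: S | m in ML N W S].
Proof. by rewrite /loyal_children => /negbTE ->. Qed.
Lemma LC_win {T : finType} (N : {set T}) (W : {set {set T}}) (S : {set T}) : S \in W -> loyal_children N W S = [set S :\ m | m in MW W S].
Proof. by rewrite /loyal_children => ->. Qed.

Lemma inj_lose {T : finType} (N : {set T}) (W : {set {set T}}) (S : {set T}) : {in ML N W S &, injective (fun m => m |: S)}.
Proof.
move=> m1 m2; rewrite !inE => /andP[/andP[m1S _] _] /andP[/andP[m2S _] _] e.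
have : m1 \in m1 |: S by rewrite !inE eqxx.
by rewrite e !inE (negbTE m1S) orbF => /eqP.
Qed.
Lemma inj_win {T : finType} (W : {set {set T}}) (S : {set T}) : {in MW W S &, injective (fun m => S :\ m)}.
Proof.
move=> m1 m2; rewrite !inE => /andP[m1S _] /andP[m2S _] e.
have : m1 \notin S :\ m1 by rewrite !inE eqxx.
by rewrite e !inE m1S andbT negbK => /eqP.
Qed.

Lemma sum_lose {T : finType} (N : {set T}) (W : {set {set T}}) (S : {set T}) (F : {set T} -> rat) : S \notin W ->
  \sum_(C in loyal_children N W S) F C = \sum_(m in ML N W S) F (m |: S).
Proof. by move=> SW; rewrite LC_lose // big_imset //; apply: inj_lose. Qed.
Lemma card_lose {T : finType} (N : {set T}) (W : {set {set T}}) (S : {set T}) : S \notin W -> #|loyal_children N W S| = #|ML N W S|.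
Proof. by move=> SW; rewrite LC_lose // card_in_imset //; apply: inj_lose. Qed.
Lemma sum_win {T : finType} (N : {set T}) (W : {set {set T}}) (S : {set T}) (F : {set T} -> rat) : S \in W ->
  \sum_(C in loyal_children N W S) F C = \sum_(m in MW W S) F (S :\ m).
Proof. by move=> SW; rewrite LC_win // big_imset //; apply: inj_win. Qed.
Lemma card_win {T : finType} (N : {set T}) (W : {set {set T}}) (S : {set T}) : S \in W -> #|loyal_children N W S| = #|MW W S|.
Proof. by move=> SW; rewrite LC_win // card_in_imset //; apply: inj_win. Qed.

Lemma alpha_lose {T : finType} (N : {set T}) (W : {set {set T}}) (k : T) (S : {set T}) : S \subset N -> S \notin W -> ~~ decisive W k S -> k \notin S ->
  alpha N W k S = (\sum_(m in ML N W S) alpha N W k (m |: S)) / (#|ML N W S|)%:R.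
Proof.
move=> SN SW nd kS; rewrite alpha_unfold // (negbTE nd).
rewrite /successful (negbTE SW) kS /= andbF.
by rewrite sum_lose // card_lose.
Qed.

Lemma alpha_win {T : finType} (N : {set T}) (W : {set {set T}}) (k : T) (S : {set T}) : S \subset N -> S \in W -> ~~ decisive W k S -> k \in S ->
  alpha N W k S = (\sum_(m in MW W S) alpha N W k (S :\ m)) / (#|MW W S|)%:R.
Proof.
move=> SN SW nd kS; rewrite alpha_unfold // (negbTE nd).
rewrite /successful SW kS /=.
by rewrite sum_win // card_win.
Qed.

Lemma alpha_notsucc {T : finType} (N : {set T}) (W : {set {set T}}) (k : T) (S : {set T}) : S \subset N -> ~~ decisive W k S -> ~~ successful W k S ->
  alpha N W k S = 0.
Proof. by move=> SN nd ns; rewrite alpha_unfold // (negbTE nd) ns. Qed.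

Lemma alpha_dec {T : finType} (N : {set T}) (W : {set {set T}}) (k : T) (S : {set T}) : S \subset N -> decisive W k S -> alpha N W k S = 1.
Proof. by move=> SN d; rewrite alpha_unfold // d. Qed.

Definition mono {T : finType} (N : {set T}) (W : {set {set T}}) := forall S S' : {set T}, S \in W -> S \subset S' -> S' \subset N -> S' \in W.

Lemma ML_sub {T : finType} (N : {set T}) (W : {set {set T}}) (S : {set T}) (m : T) : S \subset N -> m \in ML N W S -> m |: S \subset N.
Proof. by move=> SN; rewrite !inE => /andP[/andP[_ mN] _]; rewrite subUset sub1set mN. Qed.

Lemma avg_lose {T : finType} (N : {set T}) (W : {set {set T}}) (k : T) (S : {set T}) : mono N W -> k \in N -> S \subset N -> S \notin W -> (0 < #|ML N W S|)%N ->
  alpha N W k S * (#|ML N W S|)%:R = \sum_(m in ML N W S) alpha N W k (m |: S).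
Proof.
move=> mo kN SN SW Mp.
have Mn : (#|ML N W S|)%:R != 0 :> rat by rewrite pnatr_eq0 -lt0n.
have [d|nd] := boolP (decisive W k S).
  rewrite alpha_dec // mul1r -sum1_card natr_sum; apply: eq_bigr => m mM.
  move: d; rewrite /decisive /yes_decisive /no_decisive (negbTE SW) /= andbF /=.
  case/andP => kS kW; move: (mM); rewrite !inE => /andP[/andP[mS mN] mW].
  symmetry; apply: alpha_dec; first exact: ML_sub mM.
  apply/orP; right; apply/and3P; split => //.
    rewrite !inE negb_or kS andbT; apply/eqP => ek; move: mW; by rewrite -ek kW.
  apply: mo kW _ _; first by apply/subsetP => x; rewrite !inE; case/orP=> ->; rewrite ?orbT.
  by rewrite !subUset !sub1set mN kN SN.
have [kS|kS] := boolP (k \in S).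
  rewrite alpha_notsucc //; last by rewrite /successful kS (negbTE SW).
  rewrite mul0r big1 // => m mM; apply: alpha_notsucc; first exact: ML_sub mM.
    move: mM; rewrite !inE => /andP[_ mW].
    by rewrite /decisive /yes_decisive /no_decisive (negbTE mW) !inE kS orbT /=.
  move: mM; rewrite !inE => /andP[_ mW].
  by rewrite /successful (negbTE mW) !inE kS orbT.
by rewrite alpha_lose // divfK.
Qed.

Lemma avg_win {T : finType} (N : {set T}) (W : {set {set T}}) (k : T) (S : {set T}) : mono N W -> S \subset N -> S \in W -> (0 < #|MW W S|)%N ->
  alpha N W k S * (#|MW W S|)%:R = \sum_(m in MW W S) alpha N W k (S :\ m).
Proof.
move=> mo SN SW Mp.
have Mn : (#|MW W S|)%:R != 0 :> rat by rewrite pnatr_eq0 -lt0n.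
have subD m : S :\ m \subset N by apply: subset_trans SN; apply: subsetDl.
have [d|nd] := boolP (decisive W k S).
  rewrite alpha_dec // mul1r -sum1_card natr_sum; apply: eq_bigr => m mM.
  move: d; rewrite /decisive /yes_decisive /no_decisive SW /= andbF orbF.
  case/andP => kS kW; move: (mM); rewrite !inE => /andP[mS mW].
  symmetry; apply: alpha_dec => //.
  apply/orP; left; apply/and3P; split => //.
    rewrite !inE kS andbT; apply/eqP => ek; move: mW; by rewrite -ek (negbTE kW).
  apply/negP => H; move/negP: kW; apply; apply: mo H _ _ => //.
  by apply/subsetP => x; rewrite !inE => /and3P[-> _ ->].
have [kS|kS] := boolP (k \in S); last first.
  rewrite alpha_notsucc //; last by rewrite /successful (negbTE kS) SW.
  rewrite mul0r big1 // => m mM; apply: alpha_notsucc => //.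
    move: mM; rewrite !inE => /andP[_ mW].
    by rewrite /decisive /yes_decisive /no_decisive mW !inE (negbTE kS) /=; rewrite ?andbF.
  move: mM; rewrite !inE => /andP[_ mW].
  by rewrite /successful mW !inE (negbTE kS) andbF.
by rewrite alpha_win // divfK.
Qed.


Lemma ML_meas {T : finType} (N : {set T}) (W : {set {set T}}) (S : {set T}) m :
  m \in ML N W S -> (#|N :\: (m |: S)| < #|N :\: S|)%N.
Proof.
rewrite !inE => /andP[/andP[mS mN] _].
rewrite (cardsD1 m (N :\: S)) !inE mS mN /= add1n ltnS; apply/subset_leq_card/subsetP => x.
by rewrite !inE; case: (x == m) => //=.
Qed.

Lemma MW_meas {T : finType} (W : {set {set T}}) (S : {set T}) m :
  m \in MW W S -> (#|S :\ m| < #|S|)%N.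
Proof. by rewrite !inE => /andP[mS _]; rewrite (cardsD1 m S) mS. Qed.

Definition u {T : finType} (N : {set T}) (W : {set {set T}}) (I S : {set T}) : rat :=
  \sum_(k in I) alpha N W k S.

Lemma u_ge0 {T : finType} (N : {set T}) (W : {set {set T}}) (I S : {set T}) : 0 <= u N W I S.
Proof. by apply: sumr_ge0 => k _; apply: alpha_ge0. Qed.

Lemma u_ge_alpha {T : finType} (N : {set T}) (W : {set {set T}}) (I S : {set T}) k :
  k \in I -> alpha N W k S <= u N W I S.
Proof.
move=> kI; rewrite /u (bigD1 k) //= lerDl; apply: sumr_ge0 => j _; exact: alpha_ge0.
Qed.

Lemma u_lose {T : finType} (N : {set T}) (W : {set {set T}}) (I S : {set T}) :
  mono N W -> I \subset N -> S \subset N -> S \notin W -> (0 < #|ML N W S|)%N ->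
  u N W I S * (#|ML N W S|)%:R = \sum_(m in ML N W S) u N W I (m |: S).
Proof.
move=> mo IN SN SW Mp; rewrite /u mulr_suml.
rewrite [RHS]exchange_big /=; apply: eq_bigr => k kI.
apply: avg_lose => //; exact: (subsetP IN).
Qed.

Lemma u_win {T : finType} (N : {set T}) (W : {set {set T}}) (I S : {set T}) :
  mono N W -> S \subset N -> S \in W -> (0 < #|MW W S|)%N ->
  u N W I S * (#|MW W S|)%:R = \sum_(m in MW W S) u N W I (S :\ m).
Proof.
move=> mo SN SW Mp; rewrite /u mulr_suml.
rewrite [RHS]exchange_big /=; apply: eq_bigr => k kI.
exact: avg_win.
Qed.

Lemma ge_from_mul (a b c : rat) : 0 < c -> a * c <= b * c -> a <= b.
Proof. by move=> cp; rewrite ler_pM2r. Qed.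

Lemma U1 {T : finType} (N : {set T}) (W : {set {set T}}) (I S : {set T}) :
  mono N W -> I \subset N -> S \subset N -> S \notin W -> S :|: I \in W -> 1 <= u N W I S.
Proof.
move=> mo IN; have [n] := ubnP #|N :\: S|; elim: n S => // n IH S Sn SN SW SIW.
have [M0|Mp] := posnP #|ML N W S|.
  have : ~~ (I \subset S).
    apply/negP => IS; move: SIW; rewrite (setUidPl IS); by rewrite (negbTE SW).
  case/subsetPn => k kI kS.
  have kSW : k |: S \in W.
    apply/negPn/negP => kSW.
    have : k \in ML N W S by rewrite !inE kS (subsetP IN k kI) kSW.
    by move=> kM; move: M0; rewrite (cardsD1 k) kM.
  apply: le_trans (@u_ge_alpha _ N W I S k kI); rewrite alpha_dec //.
  by apply/orP; right; apply/and3P; split.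
apply: (@ge_from_mul _ _ (#|ML N W S|%:R)); first by rewrite ltr0n.
rewrite u_lose // mul1r -sumr_const.
apply: ler_sum => m mM; apply: IH.
- by have := ML_meas mM; lia.
- exact: ML_sub mM.
- by move: mM; rewrite !inE => /andP[].
- apply: mo SIW _ _.
    by apply/subsetP => x; rewrite !inE => /orP[] ->; rewrite ?orbT.
  by rewrite subUset IN (ML_sub SN mM).
Qed.

Lemma U1' {T : finType} (N : {set T}) (W : {set {set T}}) (I S : {set T}) :
  mono N W -> S \subset N -> S \in W -> S :\: I \notin W -> 1 <= u N W I S.
Proof.
move=> mo; have [n] := ubnP #|S|; elim: n S => // n IH S Sn SN SW SIW.
have [M0|Mp] := posnP #|MW W S|.
  have : ~~ (S \subset S :\: I).
    apply/negP => SI; move: SIW; rewrite (_ : S :\: I = S) ?SW //.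
    by apply/eqP; rewrite eqEsubset SI subsetDl.
  case/subsetPn => k kS; rewrite !inE kS andbT negbK => kI.
  have kSW : S :\ k \notin W.
    apply/negP => kSW.
    have : k \in MW W S by rewrite !inE kS kSW.
    by move=> kM; move: M0; rewrite (cardsD1 k) kM.
  apply: le_trans (@u_ge_alpha _ N W I S k kI); rewrite alpha_dec //.
  by apply/orP; left; apply/and3P; split.
apply: (@ge_from_mul _ _ (#|MW W S|%:R)); first by rewrite ltr0n.
rewrite u_win // mul1r -sumr_const.
have subD m : S :\ m \subset N by apply: subset_trans SN; apply: subsetDl.
apply: ler_sum => m mM; apply: IH => //.
- by have := MW_meas mM; lia.
- by move: mM; rewrite !inE => /andP[].
- apply/negP => H; move/negP: SIW; apply; apply: mo H _ _.
    by apply/subsetP => x; rewrite !inE => /andP[-> /andP[_ ->]].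
  by apply: subset_trans SN; apply: subsetDl.
Qed.

Lemma disj_sum {T : finType} (A B : {set T}) (F : T -> rat) : [disjoint A & B] ->
  \sum_(x in A :|: B) F x = \sum_(x in A) F x + \sum_(x in B) F x.
Proof.
move=> dAB; rewrite (big_setID A) /= setUK setDUl setDv set0U.
by rewrite (setDidPl _) // disjoint_sym.
Qed.

Lemma Yyes {T : finType} (N : {set T}) (W : {set {set T}}) (I : {set T}) (i b : T)
  (G' : {set {set T}}) :
  mono N W -> N \in W -> I \subset N -> i \in I -> b \in I -> yes_blocker W b ->
  (forall A : {set T}, A \subset N :\: I -> (A \in G') = (A \in W)) ->
  (forall A : {set T}, A \subset N :\: I -> (A :|: [set i] \in G') = (A :|: I \in W)) ->
  forall A J : {set T}, A \subset N :\: I -> J \subset I :\ b ->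
  alpha ((N :\: I) :|: [set i]) G' i A <= u N W I (A :|: J).
Proof.
move=> mo NW IN iI bI yb h1 h2 A J.
set X := N :\: I; set N' := X :|: [set i].
have [n] := ubnP #|N :\: (A :|: J)|; elim: n A J => // n IH A J Sn AX JI.
have XN : X \subset N by apply: subsetDl.
have iX : i \notin X by rewrite !inE iI.
have bX : b \notin X by rewrite !inE bI.
have SN : A :|: J \subset N.
  rewrite subUset (subset_trans AX XN) /=; apply: subset_trans JI _.
  by apply: subset_trans IN; apply: subsetDl.
have bS : b \notin A :|: J.
  rewrite !inE negb_or; apply/andP; split.
    by apply/negP => /(subsetP AX); rewrite (negbTE bX).
  by apply/negP => /(subsetP JI); rewrite !inE eqxx.
have SW : A :|: J \notin W by apply/negP => /yb; rewrite (negbTE bS).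
have iA : i \notin A by apply/negP => /(subsetP AX); rewrite (negbTE iX).
have AN' : A \subset N' by apply: subset_trans AX _; apply: subsetUl.
have SIe : (A :|: J) :|: I = A :|: I.
  rewrite -setUA (setUidPr (_ : J \subset I)) //; apply: subset_trans JI _; apply: subsetDl.
have [AIW|AIW] := boolP (A :|: I \in W).
  apply: le_trans (alpha_le1 _ _ _ _) _; apply: U1 => //; by rewrite SIe.
have AG : A \notin G' by rewrite h1 //; apply/negP => /yb bA; move: bS; rewrite !inE bA.
have iAe : i |: A = A :|: [set i] by rewrite setUC.
have nd : ~~ decisive G' i A.
  by rewrite /decisive /yes_decisive /no_decisive (negbTE iA) AG iAe h2 // (negbTE AIW).
set XA := X :\: A.
have MLe : ML N' G' A = i |: XA.
  apply/setP => m; rewrite /ML !inE; case: (eqVneq m i) => [->|mi] /=.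
    by rewrite iA orbT /= iAe h2 // (negbTE AIW).
  rewrite orbF; case mA: (m \in A) => //=; case mX: ((m \notin I) && (m \in N)) => //=.
  have mXX : m \in X by rewrite !inE.
  have mAX : m |: A \subset X by rewrite subUset sub1set mXX AX.
  rewrite h1 //; apply/negP => /yb; rewrite !inE => /orP[/eqP mb|bA].
    by move: mX; rewrite -mb bI.
  by move: bS; rewrite !inE bA.
have vi0 : alpha N' G' i (i |: A) = 0.
  have iAG : i |: A \notin G' by rewrite iAe h2 // AIW.
  apply: alpha_notsucc.
  - by rewrite subUset sub1set !inE eqxx orbT AN'.
  - by rewrite /decisive /yes_decisive /no_decisive (negbTE iAG) !inE eqxx /= ?andbF.
  - by rewrite /successful (negbTE iAG) !inE eqxx.
have iXA : i \notin XA by rewrite !inE iI /= ?andbF.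
have vA : alpha N' G' i A * (#|XA|.+1)%:R = \sum_(m in XA) alpha N' G' i (m |: A).
  rewrite alpha_lose // MLe big_setU1 //= vi0 add0r cardsU1 iXA add1n.
  by rewrite divfK // pnatr_eq0.
set S := A :|: J.
have XAsub : XA \subset ML N W S.
  apply/subsetP => m; rewrite !inE => /andP[mA /andP[mI mN]].
  have mJ : m \notin J by apply/negP => /(subsetP JI); rewrite !inE (negbTE mI) andbF.
  rewrite (negbTE mA) (negbTE mJ) mN /=; apply/negP => /yb; rewrite !inE => /orP[/eqP bm|bS'].
    by move: mI; rewrite -bm bI.
  by move: bS; rewrite /S !inE bS'.
have XA0 : (0 < #|XA|)%N.
  rewrite card_gt0; apply/negP => /eqP /eqP; rewrite setD_eq0 => XAs.
  move/negP: AIW; apply; apply: mo NW _ _.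
    apply/subsetP => x xN; rewrite !inE; case xI: (x \in I); rewrite ?orbT //.
    by apply/orP; left; apply: (subsetP XAs); rewrite !inE xI xN.
  by rewrite subUset IN (subset_trans AX XN).
have Mp : (0 < #|ML N W S|)%N by apply: leq_trans XA0 (subset_leq_card XAsub).
set MI := ML N W S :&: (I :\ b).
have dXM : [disjoint XA & MI].
  rewrite -setI_eq0; apply/eqP/setP => x; rewrite !inE.
  by case: (x \in I); rewrite /= ?andbF.
have cML : (#|ML N W S| <= #|XA| + #|MI| + 1)%N.
  have sub : ML N W S \subset b |: (XA :|: MI).
    apply/subsetP => m mM; have := mM; rewrite /ML inE in_setD => /andP[/andP[mS mN] mW].
    move: (mS); rewrite /S inE negb_or => /andP[mA mJ].
    rewrite !inE mA mN /= (negbTE mA) (negbTE mJ) mW /=.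
    by case: (m == b); case: (m \in I).
  apply: leq_trans (subset_leq_card sub) _; rewrite cardsU1.
  by rewrite addnC; apply: leq_add; [exact: leq_card_setU | exact: leq_b1].
have SN' m : m \in ML N W S -> m |: S \subset N by apply: ML_sub.
have key : \sum_(m in XA) alpha N' G' i (m |: A) + alpha N' G' i A *+ #|MI|
           <= \sum_(m in ML N W S) u N W I (m |: S).
  apply: le_trans (@sum_sub_le _ (XA :|: MI) (ML N W S) (fun m => u N W I (m |: S)) _ _); last first.
  - by move=> x _; apply: u_ge0.
  - by rewrite subUset XAsub subsetIl.
  rewrite disj_sum //; apply: lerD.
    apply: ler_sum => m mXA; have mM := subsetP XAsub m mXA.
    rewrite (_ : m |: S = (m |: A) :|: J); last by rewrite /S setUA.
    apply: IH.
    - by rewrite -setUA -/S; apply: leq_trans (ML_meas mM) _; rewrite -ltnS.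
    - rewrite subUset sub1set AX andbT; move: mXA; rewrite /XA inE => /andP[_ ->] //.
    - exact: JI.
  rewrite -sumr_const; apply: ler_sum => m mMI.
  have mM : m \in ML N W S by move: mMI; rewrite inE => /andP[].
  rewrite (_ : m |: S = A :|: (m |: J)); last by rewrite /S setUCA.
  apply: IH.
  - by rewrite -setUCA -/S; apply: leq_trans (ML_meas mM) _; rewrite -ltnS.
  - exact: AX.
  - rewrite subUset sub1set JI andbT; move: mMI; rewrite inE => /andP[_ ->] //.
have uS := u_lose mo IN SN SW Mp.
have v0 := alpha_ge0 N' G' i A.
apply: (@ge_from_mul _ _ (#|ML N W S|%:R)); first by rewrite ltr0n.
rewrite uS; apply: le_trans key.
apply: le_trans (_ : alpha N' G' i A * (#|XA| + #|MI| + 1)%:R <= _).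
  by apply: ler_wpM2l => //; rewrite ler_nat.
rewrite (_ : (#|XA| + #|MI| + 1 = #|XA|.+1 + #|MI|)%N); last by rewrite addn1 addSn.
by rewrite natrD mulrDr vA mulr_natr.
Qed.

Lemma card_lt_D {T : finType} (B C : {set T}) m : m \in C -> m \notin B -> B \subset C -> (#|B| < #|C|)%N.
Proof. by move=> mC mB BC; apply: proper_card; apply/properP; split => //; exists m. Qed.

Lemma Yno {T : finType} (N : {set T}) (W : {set {set T}}) (I : {set T}) (i b : T)
  (G' : {set {set T}}) :
  mono N W -> set0 \notin W -> I \subset N -> i \in I -> b \in I -> no_blocker N W b ->
  (forall A : {set T}, A \subset N :\: I -> (A \in G') = (A \in W)) ->
  (forall A : {set T}, A \subset N :\: I -> (A :|: [set i] \in G') = (A :|: I \in W)) ->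
  forall A J : {set T}, A \subset N :\: I -> J \subset I :\ b ->
  alpha ((N :\: I) :|: [set i]) G' i (A :|: [set i]) <= u N W I (A :|: (J :|: [set b])).
Proof.
move=> mo W0 IN iI bI nb h1 h2 A J.
set X := N :\: I; set N' := X :|: [set i].
have bW (S : {set T}) : S \subset N -> b \in S -> S \in W.
  by move=> SN bS; apply/negPn/negP => /(nb S SN); rewrite bS.
have [n] := ubnP #|A :|: J|; elim: n A J => // n IH A J Sn AX JI.
have XN : X \subset N by apply: subsetDl.
have iX : i \notin X by rewrite !inE iI.
have IbN : I :\ b \subset N by apply: subset_trans IN; apply: subsetDl.
have JN : J \subset N by apply: subset_trans JI IbN.
have AN : A \subset N by apply: subset_trans AX XN.
set S := A :|: (J :|: [set b]).
have SN : S \subset N by rewrite !subUset AN JN sub1set (subsetP IN).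
have bS : b \in S by rewrite !inE eqxx !orbT.
have SW : S \in W by apply: bW.
have iA : i \notin A by apply/negP => /(subsetP AX); rewrite (negbTE iX).
have AI x : x \in A -> x \notin I by move=> /(subsetP AX); rewrite !inE => /andP[].
have JI' x : x \in J -> (x \in I) && (x != b).
  by move=> /(subsetP JI); rewrite !inE andbC.
have [AW|AW] := boolP (A \in W); last first.
  apply: le_trans (alpha_le1 _ _ _ _) _; apply: U1' => //.
  rewrite (_ : S :\: I = A) //; apply/setP => x; rewrite /S !inE.
  case xA: (x \in A); first by rewrite (AI x xA).
  case xJ: (x \in J); first by case/andP: (JI' x xJ) => ->.
  by case: eqVneq => [->|] /=; rewrite ?bI ?andbF.
set A' := A :|: [set i].
have AN' : A' \subset N' by rewrite /A' /N' setUSS // AX.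
have AG : A \in G' by rewrite h1.
have A'G : A' \in G' by rewrite h2 // bW // ?subUset ?AN ?IN // !inE bI orbT.
have iA' : i \in A' by rewrite !inE eqxx orbT.
have A'i : A' :\ i = A.
  apply/setP => x; rewrite !inE; case: eqVneq => [->|] /=; first by rewrite (negbTE iA).
  by rewrite orbF.
have A'm m : m \in A -> A' :\ m = (A :\ m) :|: [set i].
  move=> mA; have mi : m != i by apply/negP => /eqP mi; move: iA; rewrite -mi mA.
  apply/setP => x; rewrite !inE; case: (eqVneq x i) => [->|] /=; last by rewrite !orbF.
  by rewrite eq_sym mi orbT.
have nd : ~~ decisive G' i A'.
  by rewrite /decisive /yes_decisive /no_decisive A'i AG iA' /= andbF.
have MWe : MW G' A' = i |: A.
  apply/setP => m; rewrite /MW inE; case: (eqVneq m i) => [->|mi].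
    by rewrite iA' A'i AG !inE eqxx.
  rewrite !inE (negbTE mi) orbF /=; case mA: (m \in A) => //=.
  rewrite A'm // h2; last by apply: subset_trans AX; apply: subsetDl.
  by apply: bW; rewrite ?subUset ?IN ?andbT ?inE ?bI ?orbT //; apply: subset_trans AN; apply: subsetDl.
have vA0 : alpha N' G' i A = 0.
  apply: alpha_notsucc; first by apply: subset_trans AN'; rewrite /A' subsetUl.
    by rewrite /decisive /yes_decisive /no_decisive (negbTE iA) AG /= ?andbF.
  by rewrite /successful (negbTE iA) AG.
have vA : alpha N' G' i A' * (#|A|.+1)%:R = \sum_(m in A) alpha N' G' i ((A :\ m) :|: [set i]).
  rewrite alpha_win // MWe big_setU1 //= A'i vA0 add0r cardsU1 iA add1n.
  rewrite divfK ?pnatr_eq0 //; apply: eq_bigr => m mA; by rewrite A'm.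
have ASsub : A \subset MW W S.
  apply/subsetP => m mA; rewrite inE (_ : m \in S); last by rewrite /S inE mA.
  apply: bW; first by apply: subset_trans SN; apply: subsetDl.
  rewrite in_setD1 bS andbT; apply/eqP => mb; move: (AI m mA); by rewrite -mb bI.
have JSsub : J \subset MW W S.
  apply/subsetP => m mJ; rewrite inE (_ : m \in S); last by rewrite /S !inE mJ orbT.
  apply: bW; first by apply: subset_trans SN; apply: subsetDl.
  rewrite in_setD1 bS andbT; by case/andP: (JI' m mJ) => _; rewrite eq_sym.
have A0 : (0 < #|A|)%N.
  rewrite card_gt0; apply/negP => /eqP A0; move: AW; by rewrite A0 (negbTE W0).
have Mp : (0 < #|MW W S|)%N by apply: leq_trans A0 (subset_leq_card ASsub).
have dAJ : [disjoint A & J].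
  rewrite -setI_eq0; apply/eqP/setP => x; rewrite !inE.
  case xA: (x \in A) => //=; apply/negP => xJ; case/andP: (JI' x xJ); by rewrite (negbTE (AI x xA)).
have cMW : (#|MW W S| <= #|A| + #|J| + 1)%N.
  have sub : MW W S \subset b |: (A :|: J).
    apply/subsetP => m; rewrite inE => /andP[mS _]; move: mS; rewrite /S !inE.
    by case: (m \in A); case: (m \in J); case: (m == b).
  apply: leq_trans (subset_leq_card sub) _; rewrite cardsU1.
  by rewrite addnC; apply: leq_add; [exact: leq_card_setU | exact: leq_b1].
have key : \sum_(m in A) alpha N' G' i ((A :\ m) :|: [set i]) + alpha N' G' i A' *+ #|J|
           <= \sum_(m in MW W S) u N W I (S :\ m).
  apply: le_trans (@sum_sub_le _ (A :|: J) (MW W S) (fun m => u N W I (S :\ m)) _ _); last first.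
  - by move=> x _; apply: u_ge0.
  - by rewrite subUset ASsub JSsub.
  rewrite disj_sum //; apply: lerD.
    apply: ler_sum => m mA.
    have mJ : m \notin J by apply/negP => mJ; case/andP: (JI' m mJ); rewrite (negbTE (AI m mA)).
    have mb : m != b by apply/eqP => mb; move: (AI m mA); rewrite mb bI.
    rewrite (_ : S :\ m = (A :\ m) :|: (J :|: [set b])); last first.
      apply/setP => x; rewrite /S !inE; case: (eqVneq x m) => [->|] //=.
      by rewrite (negbTE mJ) (negbTE mb).
    apply: IH.
    - apply: leq_trans _ (_ : (#|A :|: J| <= n)%N); last by rewrite -ltnS.
      apply: (@card_lt_D _ _ _ m); first by rewrite !inE mA.
        by rewrite !inE eqxx (negbTE mJ).
      by apply: setSU; apply: subsetDl.
    - by apply: subset_trans AX; apply: subsetDl.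
    - exact: JI.
  rewrite -sumr_const; apply: ler_sum => m mJ.
  have mA : m \notin A by apply/negP => mA; case/andP: (JI' m mJ); rewrite (negbTE (AI m mA)).
  have mb : m != b by case/andP: (JI' m mJ).
  rewrite (_ : S :\ m = A :|: ((J :\ m) :|: [set b])); last first.
    apply/setP => x; rewrite /S !inE; case: (eqVneq x m) => [->|] //=.
    by rewrite (negbTE mA) (negbTE mb).
  apply: IH.
  - apply: leq_trans _ (_ : (#|A :|: J| <= n)%N); last by rewrite -ltnS.
    apply: (@card_lt_D _ _ _ m); first by rewrite !inE mJ orbT.
      by rewrite !inE eqxx (negbTE mA).
    by apply: setUS; apply: subsetDl.
  - exact: AX.
  - by apply: subset_trans JI; apply: subsetDl.
have uS := u_win I mo SN SW Mp.
have v0 := alpha_ge0 N' G' i A'.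
apply: (@ge_from_mul _ _ (#|MW W S|%:R)); first by rewrite ltr0n.
rewrite uS; apply: le_trans key.
apply: le_trans (_ : alpha N' G' i A' * (#|A| + #|J| + 1)%:R <= _).
  by apply: ler_wpM2l => //; rewrite ler_nat.
rewrite (_ : (#|A| + #|J| + 1 = #|A|.+1 + #|J|)%N); last by rewrite addn1 addSn.
by rewrite natrD mulrDr vA mulr_natr.
Qed.

Lemma capU_l {T : finType} (X Y A B : {set T}) : [disjoint X & Y] -> A \subset X -> B \subset Y ->
  (A :|: B) :&: X = A.
Proof.
move=> dXY AX BY; rewrite setIUl (setIidPl AX).
suff -> : B :&: X = set0 by rewrite setU0.
apply/eqP; rewrite setI_eq0; apply: disjointWl BY _; by rewrite disjoint_sym.
Qed.

Lemma sum_split {T : finType} (X Y : {set T}) (F : {set T} -> rat) : [disjoint X & Y] ->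
  \sum_(S in powerset (X :|: Y)) F S =
  \sum_(A in powerset X) \sum_(B in powerset Y) F (A :|: B).
Proof.
move=> dXY; rewrite pair_big_dep /=.
set D := [pred p : {set T} * {set T} | (p.1 \in powerset X) && (p.2 \in powerset Y)].
have inj : {in D &, injective (fun p : {set T} * {set T} => p.1 :|: p.2)}.
  move=> [A B] [A' B']; rewrite !inE /= => /andP[AX BY] /andP[A'X B'Y] e.
  have e1 : A = A' by rewrite -(capU_l dXY AX BY) e (capU_l dXY A'X B'Y).
  have dYX : [disjoint Y & X] by rewrite disjoint_sym.
  have e2 : B = B'.
    by rewrite -(capU_l dYX BY AX) setUC e setUC (capU_l dYX B'Y A'X).
  by rewrite e1 e2.
rewrite (eq_bigl (fun p => p \in D)) //.
rewrite -(big_imset F inj); apply: eq_bigl => S; apply/idP/idP.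
  rewrite powersetE => SXY; apply/imsetP; exists (S :&: X, S :&: Y).
    by rewrite !inE /= !subsetIr.
  by rewrite /= -setIUr (setIidPl SXY).
case/imsetP => [[A B]]; rewrite !inE /= => /andP[AX BY] ->.
exact: setUSS.
Qed.

Lemma sum_pow1 {T : finType} (x : T) (F : {set T} -> rat) :
  \sum_(B in powerset [set x]) F B = F set0 + F [set x].
Proof.
rewrite powerset1 big_setU1 ?big_set1 //= !inE eq_sym; apply/eqP => /setP /(_ x).
by rewrite !inE eqxx.
Qed.

Lemma card_disjU {T : finType} (A B : {set T}) : [disjoint A & B] -> #|A :|: B| = (#|A| + #|B|)%N.
Proof. by move=> d; rewrite cardsU (_ : A :&: B = set0) ?cards0 ?subn0 //; apply/eqP; rewrite setI_eq0. Qed.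

Lemma setD_AJ {T : finType} (N A J I : {set T}) : A \subset N :\: I -> J \subset I -> (A :|: J) :\: I = A.
Proof.
move=> AX JI; apply/setP => x; rewrite !inE.
case xA: (x \in A).
  by move: (subsetP AX x xA); rewrite !inE => /andP[-> _].
case xJ: (x \in J); last by rewrite andbF. by rewrite (subsetP JI x xJ).
Qed.

Lemma bg1 {T : finType} (N : {set T}) (W : {set {set T}}) (I : {set T}) (i : T) (A : {set T}) :
  i \in I -> A \subset N :\: I -> (A \in bloc_game N W I i) = (A \in W).
Proof.
move=> iI AX; have iA : i \notin A by apply/negP => /(subsetP AX); rewrite !inE iI.
rewrite /bloc_game in_setU; case: (boolP (A \in W)) => AW.
  by apply/orP; right; rewrite inE powersetE AX AW.
apply/negP; case/orP => [/imsetP[S _ e] | ].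
  by move: iA; rewrite e !inE eqxx orbT.
by rewrite inE (negbTE AW) andbF.
Qed.

Lemma bg2 {T : finType} (N : {set T}) (W : {set {set T}}) (I : {set T}) (i : T) (A : {set T}) :
  i \in I -> A \subset N :\: I -> (A :|: [set i] \in bloc_game N W I i) = (A :|: I \in W).
Proof.
move=> iI AX; have iX : i \notin N :\: I by rewrite !inE iI.
have iA : i \notin A by apply/negP => /(subsetP AX); rewrite (negbTE iX).
have Ui (B : {set T}) : i \notin B -> (B :|: [set i]) :\ i = B.
  move=> iB; apply/setP => x; rewrite !inE; case: eqVneq => [->|] /=; first by rewrite (negbTE iB).
  by rewrite orbF.
rewrite /bloc_game in_setU; apply/orP/idP.
  case => [/imsetP[S]|]; last first.
    rewrite inE powersetE => /andP[H _]; move: (subsetP H i); rewrite !inE eqxx orbT iI => /(_ isT).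
    by [].
  rewrite inE powersetE => /andP[SX SIW] e.
  have iS : i \notin S by apply/negP => /(subsetP SX); rewrite (negbTE iX).
  by rewrite -(Ui _ iA) e Ui.
by move=> AIW; left; apply/imsetP; exists A => //; rewrite inE powersetE AX.
Qed.

Lemma perA_yes {T : finType} (N : {set T}) (W : {set {set T}}) (I : {set T}) (i b : T) (A J : {set T}) :
  mono N W -> N \in W -> I \subset N -> i \in I -> b \in I -> yes_blocker W b ->
  A \subset N :\: I -> J \subset I :\ b ->
  alpha ((N :\: I) :|: [set i]) (bloc_game N W I i) i A +
  alpha ((N :\: I) :|: [set i]) (bloc_game N W I i) i (A :|: [set i])
  <= u N W I (A :|: J) + u N W I (A :|: (J :|: [set b])).
Proof.
move=> mo NW IN iI bI yb AX JI.
have JI2 : J \subset I by apply: subset_trans JI (subsetDl _ _).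
have XN : N :\: I \subset N by apply: subsetDl.
have AN : A \subset N by apply: subset_trans AX XN.
have JN : J \subset N by apply: subset_trans JI2 IN.
have bA : b \notin A by apply/negP => /(subsetP AX); rewrite !inE bI.
have bJ : b \notin J by apply/negP => /(subsetP JI); rewrite !inE eqxx.
have S1N : A :|: J \subset N by rewrite subUset AN JN.
have S2N : A :|: (J :|: [set b]) \subset N by rewrite !subUset AN JN sub1set (subsetP IN).
have S1W : A :|: J \notin W by apply/negP => /yb; rewrite !inE (negbTE bA) (negbTE bJ).
have e1 : (A :|: J) :|: I = A :|: I by rewrite -setUA (setUidPr JI2).
have e2 : (A :|: (J :|: [set b])) :|: I = A :|: I.
  by rewrite -setUA (setUidPr (_ : J :|: [set b] \subset I)) // subUset JI2 sub1set.
have [AIW|AIW] := boolP (A :|: I \in W).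
  apply: lerD; apply: le_trans (alpha_le1 _ _ _ _) _.
    by apply: U1 => //; rewrite e1.
  have [S2W|S2W] := boolP (A :|: (J :|: [set b]) \in W).
    apply: le_trans (@u_ge_alpha _ N W I _ b bI); rewrite alpha_dec //.
    apply/orP; left; apply/and3P; split => //; first by rewrite !inE eqxx !orbT.
    by apply/negP => /yb; rewrite !inE eqxx.
  by apply: U1 => //; rewrite e2.
apply: lerD.
  apply: (@Yyes _ N W I i b (bloc_game N W I i) mo NW IN iI bI yb _ _ A J AX JI).
  - by move=> B BX; apply: bg1.
  - by move=> B BX; apply: bg2.
set A' := A :|: [set i].
have A'G : A' \notin bloc_game N W I i by rewrite bg2 // AIW.
have iA' : i \in A' by rewrite !inE eqxx orbT.
rewrite alpha_notsucc //; first by apply: u_ge0.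
- by rewrite /A' setUSS // sub1set.
- by rewrite /decisive /yes_decisive /no_decisive (negbTE A'G) iA' /= ?andbF.
- by rewrite /successful (negbTE A'G) iA'.
Qed.

Lemma perA_no {T : finType} (N : {set T}) (W : {set {set T}}) (I : {set T}) (i b : T) (A J : {set T}) :
  mono N W -> set0 \notin W -> I \subset N -> i \in I -> b \in I -> no_blocker N W b ->
  A \subset N :\: I -> J \subset I :\ b ->
  alpha ((N :\: I) :|: [set i]) (bloc_game N W I i) i A +
  alpha ((N :\: I) :|: [set i]) (bloc_game N W I i) i (A :|: [set i])
  <= u N W I (A :|: J) + u N W I (A :|: (J :|: [set b])).
Proof.
move=> mo W0 IN iI bI nb AX JI.
have bW (S : {set T}) : S \subset N -> b \in S -> S \in W.
  by move=> SN bS; apply/negPn/negP => /(nb S SN); rewrite bS.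
have JI2 : J \subset I by apply: subset_trans JI (subsetDl _ _).
have XN : N :\: I \subset N by apply: subsetDl.
have AN : A \subset N by apply: subset_trans AX XN.
have JN : J \subset N by apply: subset_trans JI2 IN.
have S1N : A :|: J \subset N by rewrite subUset AN JN.
have S2N : A :|: (J :|: [set b]) \subset N by rewrite !subUset AN JN sub1set (subsetP IN).
have S2W : A :|: (J :|: [set b]) \in W by apply: bW; rewrite // !inE eqxx !orbT.
have iA : i \notin A by apply/negP => /(subsetP AX); rewrite !inE iI.
have [AW|AW] := boolP (A \in W); last first.
  apply: lerD; apply: le_trans (alpha_le1 _ _ _ _) _; last first.
    apply: U1' => //; rewrite (@setD_AJ _ N) //; by rewrite subUset JI2 sub1set.
  have [S1W|S1W] := boolP (A :|: J \in W).
    by apply: U1' => //; rewrite (@setD_AJ _ N).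
  apply: le_trans (@u_ge_alpha _ N W I _ b bI); rewrite alpha_dec //.
  have bS1 := nb _ S1N S1W.
  apply/orP; right; apply/and3P; split => //.
  by apply: bW; [rewrite subUset sub1set (subsetP IN b bI) S1N | rewrite !inE eqxx].
apply: lerD.
  have AG : A \in bloc_game N W I i by rewrite bg1.
  rewrite alpha_notsucc //; first by apply: u_ge0.
  - by apply: subset_trans AX (subsetUl _ _).
  - by rewrite /decisive /yes_decisive /no_decisive AG (negbTE iA) /= ?andbF.
  - by rewrite /successful AG (negbTE iA).
apply: (@Yno _ N W I i b (bloc_game N W I i) mo W0 IN iI bI nb _ _ A J AX JI).
- by move=> B BX; apply: bg1.
- by move=> B BX; apply: bg2.
Qed.

Theorem theorem3 (T : finType) (N : {set T}) (W : {set {set T}})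
  (I : {set T}) (i : T) :
  is_SVG N W -> I \subset N -> i \in I ->
  ((exists2 b, b \in I & yes_blocker W b) \/
   (exists2 b, b \in I & no_blocker N W b)) ->
  RM'_bloc N W I i <= \sum_(k in I) RM' N W k.
Proof.
move=> [N0 Wsub mo W0 NW] IN iI hb.
have [b bI Hb] : exists2 b, b \in I & (yes_blocker W b \/ no_blocker N W b).
  by case: hb => [[b ? ?]|[b ? ?]]; exists b => //; [left|right].
set X := N :\: I.
have iX : i \notin X by rewrite !inE iI.
have dXi : [disjoint X & [set i]] by rewrite disjoint_sym disjoints1.
have dXI : [disjoint X & I].
  rewrite -setI_eq0; apply/eqP/setP => x; rewrite !inE; by case: (x \in I); rewrite ?andbF.
have NXI : N = X :|: I.
  apply/setP => x; rewrite !inE; case xI: (x \in I); rewrite ?orbT ?orbF //=.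
  exact: (subsetP IN).
have Ie : I = (I :\ b) :|: [set b].
  apply/setP => x; rewrite !inE; case: eqVneq => [->|] /=; by rewrite ?bI ?orbF ?orbT.
have dIb : [disjoint I :\ b & [set b]] by rewrite disjoint_sym disjoints1 !inE eqxx.
set c := #|I :\ b|.
have cI : #|I| = c.+1 by rewrite (cardsD1 b I) bI.
have cN : #|N| = (#|X| + c.+1)%N by rewrite {1}NXI card_disjU // cI.
have cN' : #|X :|: [set i]| = (#|X| + 1)%N by rewrite card_disjU // cards1.
set v := alpha (X :|: [set i]) (bloc_game N W I i) i.
have perA A : A \in powerset X ->
    (v A + v (A :|: [set i])) * (2 ^ c)%:R <= \sum_(J in powerset I) u N W I (A :|: J).
  rewrite powersetE => AX.
  have -> : powerset I = powerset ((I :\ b) :|: [set b]) by rewrite -Ie.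
  rewrite sum_split //; under eq_bigr do rewrite sum_pow1 setU0.
  rewrite (_ : (2 ^ c)%:R = #|powerset (I :\ b)|%:R); last by rewrite card_powerset.
  rewrite mulr_natr -sumr_const; apply: ler_sum => J; rewrite powersetE => JI.
  case: Hb => Hb.
    exact: perA_yes.
  exact: perA_no.
rewrite /RM'_bloc /RM' /bloc_players -/X -/v cN'.
rewrite sum_split //; under eq_bigr do rewrite sum_pow1 setU0.
rewrite -mulr_suml exchange_big /=.
rewrite (_ : powerset N = powerset (X :|: I)); last by rewrite -NXI.
rewrite sum_split // cN.
have D1 : (2 ^ (#|X| + c.+1))%:R = (2 ^ (#|X| + 1))%:R * (2 ^ c)%:R :> rat.
  by rewrite -natrM -expnD addnS addn1 addSn.
rewrite D1.
have E (a : rat) : a / (2 ^ (#|X| + 1))%:R = a * (2 ^ c)%:R / ((2 ^ (#|X| + 1))%:R * (2 ^ c)%:R).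
  by field; rewrite !pnatr_eq0 !expn_eq0.
rewrite E; apply: ler_wpM2r; first by rewrite invr_ge0 mulr_ge0 // ler0n.
rewrite mulr_suml; apply: ler_sum => A AX.
exact: perA.
Qed.
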